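(* If $A$ is an $m$-dimensional permutation array of size $n_1\times\cdots\times n_m$ and odd order $n$, then there is an $n_1\times\cdots\times n_m$ window in the periodic extension of $A$ which has a repeated difference vector. In particular, no $m$-dimensional Costas array of odd order is periodic Costas.
   Context: For $n\in\mathbb{N}$, $[n]=\{1,\dots,n\}$; $m\ge2$, all $n_i\ge2$. A binary array $A:[n_1]\times\cdots\times[n_m]\to\{0,1\}$ is an $m$-dimensional permutation array if there exist $k$ with $1\le k<m$ and a bijection $\varphi:[n_1]\times\cdots\times[n_k]\to[n_{k+1}]\times\cdots\times[n_m]$ with $A(a_1,\dots,a_m)=1$ iff $\varphi(a_1,\dots,a_k)=(a_{k+1},\dots,a_m)$; points with value 1 are dots; order $n=n_1\cdots n_k$. The periodic extension $\mathbb{A}:\mathbb{Z}^m\to\{0,1\}$ is $\mathbb{A}(a_1,\dots,a_m)=A(a_1',\dots,a_m')$ with $a_i'\in[n_i]$, $a_i'\equiv a_i\pmod{n_i}$; an $n_1\times\cdots\times n_m$ window is the restriction of $\mathbb{A}$ to a box $\prod_i\{k_i,\dots,k_i+n_i-1\}$. The difference vector from dot $(a_i)$ to distinct dot $(w_i)$ is $\langle w_i-a_i\rangle_i$; a window has a repeated difference vector if two distinct ordered pairs of distinct dots in it have equal difference vectors. An $m$-dimensional Costas array is a permutation array with no repeated difference vector; it is periodic Costas if every $n_1\times\cdots\times n_m$ window of its periodic extension has no repeated difference vector. *)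

(* Defs.v *)
From mathcomp Require Import all_boot all_order all_algebra.
Set Implicit Arguments. Unset Strict Implicit. Unset Printing Implicit Defensive.
Import Order.TTheory GRing.Theory Num.Theory.

(* Coordinates are 0-based: [n_i] = {1..n_i} is represented by {0..n_i-1}.
   A point of the box is a finite function 'I_m -> nat, a point of Z^m a
   finite function 'I_m -> int. *)

Section Defs.
Variable m : nat.
Variable n : 'I_m -> nat.
Notation pt := {ffun 'I_m -> nat}.
Notation zpt := {ffun 'I_m -> int}.

Definition inbox (a : pt) : Prop := forall i, a i < n i.

(* points of [n_1] x ... x [n_k], stored in coordinates < k (others are 0) *)
Definition lowbox (k : nat) (x : pt) : Prop :=
  forall i : 'I_m, if (i < k)%N then x i < n i else x i == 0%N.
(* points of [n_{k+1}] x ... x [n_m], stored in coordinates >= k *)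
Definition highbox (k : nat) (y : pt) : Prop :=
  forall i : 'I_m, if (i < k)%N then y i == 0%N else y i < n i.

Definition lowpart (k : nat) (a : pt) : pt := [ffun i : 'I_m => if (i < k)%N then a i else 0%N].
Definition highpart (k : nat) (a : pt) : pt := [ffun i : 'I_m => if (i < k)%N then 0%N else a i].

Definition perm_array_wrt (k : nat) (A : pt -> bool) : Prop :=
  (0 < k < m)%N /\
  exists phi : pt -> pt,
    (forall x, lowbox k x -> highbox k (phi x)) /\
    (forall x y, lowbox k x -> lowbox k y -> phi x = phi y -> x = y) /\
    (forall y, highbox k y -> exists x, lowbox k x /\ phi x = y) /\
    (forall a, inbox a -> (A a <-> phi (lowpart k a) = highpart k a)).

Definition perm_array (A : pt -> bool) : Prop := exists k, perm_array_wrt k A.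

Definition perm_order (k : nat) : nat := (\prod_(i < m | (i < k)%N) n i)%N.

Definition pext (A : pt -> bool) (z : zpt) : bool :=
  A [ffun i : 'I_m => `|((z i) %% (n i)%:Z)%Z|%N].

Definition in_window (c z : zpt) : Prop :=
  forall i, ((c i <= z i) /\ (z i <= c i + (n i)%:Z - 1))%R.

Definition rep_dv (D : zpt -> Prop) : Prop :=
  exists a w a' w' : zpt,
    [/\ D a, D w, D a' & D w'] /\ a != w /\ a' != w' /\ (a, w) != (a', w') /\
    forall i, (w i - a i = w' i - a' i)%R.

Definition window_dots (A : pt -> bool) (c : zpt) : zpt -> Prop :=
  fun z => in_window c z /\ pext A z.

Definition array_dots (A : pt -> bool) : zpt -> Prop :=
  fun z => (forall i, ((0 <= z i) /\ (z i < (n i)%:Z))%R) /\ A [ffun i : 'I_m => `|z i|%N].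

Definition costas (A : pt -> bool) : Prop := perm_array A /\ ~ rep_dv (array_dots A).

Definition periodic_costas (A : pt -> bool) : Prop :=
  perm_array A /\ forall c : zpt, ~ rep_dv (window_dots A c).

End Defs.

(* Main.v *)
Require Import Defs.
From mathcomp Require Import all_boot all_order all_algebra zify.
Set Implicit Arguments. Unset Strict Implicit. Unset Printing Implicit Defensive.
Import Order.TTheory GRing.Theory Num.Theory.

Local Open Scope ring_scope.


Lemma near0 (h : nat) (t : int) : - (2 * h + 1)%:Z < t < (2 * h + 1)%:Z ->
  exists j : int, - h%:Z <= t + j * (2 * h + 1)%:Z <= h%:Z.
Proof.
move=> /andP[h1 h2].
case: (lerP t h%:Z) => h3.
  case: (lerP (- h%:Z) t) => h4.
    by exists 0; apply/andP; split; lia.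
  by exists 1; apply/andP; split; lia.
by exists (-1); apply/andP; split; lia.
Qed.

Lemma coord_lift (N : nat) (p q p' q' : int) : odd N ->
  0 <= p < N%:Z -> 0 <= q < N%:Z -> 0 <= p' < N%:Z ->
  (exists e : int, q' - p' = q - p + e * N%:Z) ->
  exists v : int * int * int * int * int,
    let: (A, W, A', W', c) := v in
    [/\ (exists j, A = p + j * N%:Z), (exists j, W = q + j * N%:Z),
        (exists j, A' = p' + j * N%:Z), (exists j, W' = q' + j * N%:Z) &
     W - A = W' - A' /\
     [/\ c <= A <= c + N%:Z - 1, c <= W <= c + N%:Z - 1,
         c <= A' <= c + N%:Z - 1 & c <= W' <= c + N%:Z - 1]].
Proof.
move=> oN /andP[p0 p1] /andP[q0 q1] /andP[p'0 p'1] [e he].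
have [h hN] : exists h, N = (2 * h + 1)%N.
  exists N./2; rewrite -[N in LHS](odd_double_half N) oN; lia.
subst N.
have [j hj] := @near0 h (q - p) ltac:(apply/andP; split; lia).
have [j' hj'] := @near0 h (p' - p) ltac:(apply/andP; split; lia).
set d := q - p + j * (2 * h + 1)%N%:Z in hj.
set r := p' - p + j' * (2 * h + 1)%N%:Z in hj'.
move: hj hj' => /andP[d1 d2] /andP[r1 r2].
exists (p, p + d, p + r, p + r + d,
        p + (if d < 0 then d else 0) + (if r < 0 then r else 0)).
split.
- by exists 0; lia.
- by exists j; rewrite /d; lia.
- by exists j'; rewrite /r; lia.
- by exists (j + j' - e); rewrite /r /d; lia.
- split; first lia.
  case: (ltrP d 0) => hd; case: (ltrP r 0) => hr; split; apply/andP; split; lia.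
Qed.

Local Close Scope ring_scope.


Lemma card_lt B b : b <= B -> #|[pred t : 'I_B | t < b]| = b.
Proof.
move=> hb.
have -> : #|[pred t : 'I_B | t < b]| = #|[seq widen_ord hb t | t : 'I_b]|.
  apply: eq_card => t; rewrite inE /=; apply/idP/mapP => [lt|[u _ ->]] //.
    by exists (Ordinal lt); rewrite ?mem_enum //; apply: val_inj.
  by case: u.
rewrite (card_uniqP _); first by rewrite size_map; apply: size_enum_ord.
rewrite /image_mem map_inj_uniq ?enum_uniq // => u v /(congr1 val) /= e; exact: val_inj.
Qed.

Lemma card_box m B (b : 'I_m -> nat) : (forall i, b i <= B) ->
  #|[set p : {ffun 'I_m -> 'I_B} | [forall i, p i < b i]]| = (\prod_i b i)%N.
Proof.
move=> hb.
have -> : #|[set p : {ffun 'I_m -> 'I_B} | [forall i, p i < b i]]| =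
   #|(family (fun i => [pred t : 'I_B | t < b i]) : simpl_pred {ffun 'I_m -> 'I_B})|.
  apply: eq_card => p; rewrite inE; apply/forallP/familyP => h i; exact: h.
rewrite card_family foldrE big_map big_enum /=.
by apply: eq_bigr => i _; rewrite card_lt.
Qed.

Lemma succ_mod_neq y N : 1 < N -> y < N -> y.+1 %% N != y.
Proof.
move=> h1 h2; case: (ltnP y.+1 N) => h3; first by rewrite modn_small // gtn_eqF.
have -> : y.+1 = N by apply/eqP; rewrite eqn_leq h2 h3.
rewrite modnn; apply/eqP; lia.
Qed.


Lemma odd_prod_factor m (b : 'I_m -> nat) j : odd (\prod_i b i) -> odd (b j).
Proof. by rewrite (bigD1 j) //= oddM => /andP[]. Qed.

Lemma resid_ok m (n : 'I_m -> nat) (z : {ffun 'I_m -> int}) (y : {ffun 'I_m -> nat}) :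
  (forall i, exists j : int, z i = ((y i)%:Z + j * (n i)%:Z)%R) -> (forall i, y i < n i) ->
  [ffun i => `|((z i) %% (n i)%:Z)%Z|%N] = y.
Proof.
move=> hz hy; apply/ffunP => i; rewrite ffunE; have [j ->] := hz i.
rewrite GRing.addrC modzMDl modz_small ?absz_nat //.
by apply/andP; split => //; rewrite ltz_nat.
Qed.



Definition sxf m (n : 'I_m -> nat) (i0 : 'I_m) (x : {ffun 'I_m -> nat}) : {ffun 'I_m -> nat} :=
  [ffun i => if i == i0 then (x i).+1 %% n i else x i].
Definition Df m (n : 'I_m -> nat) k (phi : {ffun 'I_m -> nat} -> {ffun 'I_m -> nat}) i0
  (x : {ffun 'I_m -> nat}) : {ffun 'I_m -> nat} :=
  [ffun i : 'I_m => if (i < k)%N then 0%N else (phi (sxf n i0 x) i + n i - phi x i) %% n i].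

Definition mpf m k (phi : {ffun 'I_m -> nat} -> {ffun 'I_m -> nat}) (y : {ffun 'I_m -> nat}) :
  {ffun 'I_m -> nat} := [ffun i : 'I_m => if (i < k)%N then y i else phi y i].

Lemma geom m (n : 'I_m -> nat) (A : {ffun 'I_m -> nat} -> bool) k phi (i0 : 'I_m) x x' :
  (forall i, (2 <= n i)%N) -> (forall i, odd (n i)) -> (i0 < k)%N ->
  (forall x, lowbox n k x -> highbox n k (phi x)) ->
  (forall a, inbox n a -> (A a <-> phi (lowpart k a) = highpart k a)) ->
  lowbox n k x -> lowbox n k x' -> x != x' ->
  (forall x, lowbox n k x -> lowbox n k (sxf n i0 x)) ->
  Df n k phi i0 x = Df n k phi i0 x' ->
  exists c, rep_dv (window_dots n A c).
Proof.
move=> hn oddn hi0 H1 H4 xL x'L xx' sxL De.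
have mpI (y : {ffun 'I_m -> nat}) : lowbox n k y -> inbox n (mpf k phi y).
  move=> yL; rewrite /inbox => i; rewrite ffunE; case: ifP => h.
    by move: (yL i); rewrite h.
  by move: (H1 _ yL i); rewrite h.
have lowmp (z : {ffun 'I_m -> nat}) : lowbox n k z -> lowpart k (mpf k phi z) = z.
  move=> yL; apply/ffunP => i; rewrite !ffunE; case h: (i < k) => //.
  by move: (yL i); rewrite h => /eqP ->.
have mpA (z : {ffun 'I_m -> nat}) : lowbox n k z -> A (mpf k phi z).
  move=> zL; apply/(H4 _ (mpI z zL)); rewrite lowmp //.
  apply/ffunP => i; rewrite !ffunE; case h: (i < k) => //.
  by move: (H1 _ zL i); rewrite h => /eqP ->.
have phiB (y : {ffun 'I_m -> nat}) (i : 'I_m) : lowbox n k y -> ~~ (i < k)%N -> phi y i < n i.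
  by move=> yL /negbTE h; move: (H1 _ yL i); rewrite h.
have sxxL := sxL _ xL.
have sxx'L := sxL _ x'L.
have cong (i : 'I_m) : exists e : int,
    (Posz (mpf k phi (sxf n i0 x') i) - Posz (mpf k phi x' i) =
     Posz (mpf k phi (sxf n i0 x) i) - Posz (mpf k phi x i) + e * Posz (n i))%R.
  rewrite !ffunE; case hik: (i < k).
    case: (eqVneq i i0) => [-> | ne].
      have d1 := divn_eq (x i0).+1 (n i0).
      have d2 := divn_eq (x' i0).+1 (n i0).
      exists (Posz ((x i0).+1 %/ n i0) - Posz ((x' i0).+1 %/ n i0))%R.
      move: d1 d2; generalize ((x i0).+1 %/ n i0) ((x' i0).+1 %/ n i0) ((x i0).+1 %% n i0) ((x' i0).+1 %% n i0) (x i0) (x' i0) (n i0) => a b c d u u' N d1 d2.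
      clear -d1 d2. nia.
    by exists 0; lia.
  have := congr1 (fun f : {ffun 'I_m -> nat} => f i) De; rewrite /Df !ffunE hik => e.
  have b1 := phiB _ i xL (negbT hik).
  have b2 := phiB _ i x'L (negbT hik).
  have b3 := phiB _ i sxxL (negbT hik).
  have b4 := phiB _ i sxx'L (negbT hik).
  have d1 := divn_eq (phi (sxf n i0 x) i + n i - phi x i) (n i).
  have d2 := divn_eq (phi (sxf n i0 x') i + n i - phi x' i) (n i).
  exists (Posz ((phi (sxf n i0 x') i + n i - phi x' i) %/ n i) - Posz ((phi (sxf n i0 x) i + n i - phi x i) %/ n i))%R.
  move: d1 d2 e; generalize ((phi (sxf n i0 x) i + n i - phi x i) %/ n i) ((phi (sxf n i0 x') i + n i - phi x' i) %/ n i) ((phi (sxf n i0 x) i + n i - phi x i) %% n i) ((phi (sxf n i0 x') i + n i - phi x' i) %% n i) => a b c d d1 d2 e.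
  move: b1 b2 b3 b4 d1 d2 e; generalize (phi (sxf n i0 x) i) (phi (sxf n i0 x') i) (phi x i) (phi x' i) (n i) => z z' y y' N b1 b2 b3 b4 d1 d2 e.
  clear -b1 b2 b3 b4 d1 d2 e; nia.
have bnd (y : {ffun 'I_m -> nat}) (i : 'I_m) : lowbox n k y ->
    (0 <= Posz (mpf k phi y i) < Posz (n i))%R.
  by move=> yL; rewrite ltz_nat (mpI y yL i) andbT.
have hall (i : 'I_m) := coord_lift (oddn i) (bnd x i xL) (bnd (sxf n i0 x) i sxxL) (bnd x' i x'L) (cong i).
have [V hV] := fin_all_exists hall.
pose a : {ffun 'I_m -> int} := [ffun i => (V i).1.1.1.1].
pose w : {ffun 'I_m -> int} := [ffun i => (V i).1.1.1.2].
pose a' : {ffun 'I_m -> int} := [ffun i => (V i).1.1.2].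
pose w' : {ffun 'I_m -> int} := [ffun i => (V i).1.2].
pose c : {ffun 'I_m -> int} := [ffun i => (V i).2].
have aE i : a i = (V i).1.1.1.1 by rewrite ffunE.
have wE i : w i = (V i).1.1.1.2 by rewrite ffunE.
have a'E i : a' i = (V i).1.1.2 by rewrite ffunE.
have w'E i : w' i = (V i).1.2 by rewrite ffunE.
have cE i : c i = (V i).2 by rewrite ffunE.
have resa : [ffun i => `|((a i) %% (n i)%:Z)%Z|%N] = mpf k phi x.
  apply: resid_ok; last exact: mpI.
  move=> i; rewrite aE; move: (hV i); case: (V i) => [[[[a1 w1] a2] w2] c1] /= [ha _ _ _ _]; exact: ha.
have resw : [ffun i => `|((w i) %% (n i)%:Z)%Z|%N] = mpf k phi (sxf n i0 x).
  apply: resid_ok; last exact: mpI.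
  move=> i; rewrite wE; move: (hV i); case: (V i) => [[[[a1 w1] a2] w2] c1] /= [_ ha _ _ _]; exact: ha.
have resa' : [ffun i => `|((a' i) %% (n i)%:Z)%Z|%N] = mpf k phi x'.
  apply: resid_ok; last exact: mpI.
  move=> i; rewrite a'E; move: (hV i); case: (V i) => [[[[a1 w1] a2] w2] c1] /= [_ _ ha _ _]; exact: ha.
have resw' : [ffun i => `|((w' i) %% (n i)%:Z)%Z|%N] = mpf k phi (sxf n i0 x').
  apply: resid_ok; last exact: mpI.
  move=> i; rewrite w'E; move: (hV i); case: (V i) => [[[[a1 w1] a2] w2] c1] /= [_ _ _ ha _]; exact: ha.
have bA i : (c i <= a i <= c i + Posz (n i) - 1)%R.
  by rewrite aE cE; move: (hV i); case: (V i) => [[[[a1 w1] a2] w2] c1] /= [_ _ _ _ [_ []]].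
have bW i : (c i <= w i <= c i + Posz (n i) - 1)%R.
  by rewrite wE cE; move: (hV i); case: (V i) => [[[[a1 w1] a2] w2] c1] /= [_ _ _ _ [_ []]].
have bA' i : (c i <= a' i <= c i + Posz (n i) - 1)%R.
  by rewrite a'E cE; move: (hV i); case: (V i) => [[[[a1 w1] a2] w2] c1] /= [_ _ _ _ [_ []]].
have bW' i : (c i <= w' i <= c i + Posz (n i) - 1)%R.
  by rewrite w'E cE; move: (hV i); case: (V i) => [[[[a1 w1] a2] w2] c1] /= [_ _ _ _ [_ []]].
have inw (z : {ffun 'I_m -> int}) : (forall i, (c i <= z i <= c i + Posz (n i) - 1)%R) -> in_window n c z.
  by move=> h i; have /andP[h1 h2] := h i; split.
have neq_sx (y : {ffun 'I_m -> nat}) : lowbox n k y -> mpf k phi y != mpf k phi (sxf n i0 y).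
  move=> yL; apply/eqP => /(congr1 (fun f : {ffun 'I_m -> nat} => f i0)).
  rewrite !ffunE hi0 eqxx => /esym/eqP; apply/negP; apply: succ_mod_neq => //.
  by move: (yL i0); rewrite hi0.
have dA : window_dots n A c a.
  split; first exact: inw bA.
  by move: (mpA x xL); rewrite -resa => h; exact: h.
have dW : window_dots n A c w.
  split; first exact: inw bW.
  by move: (mpA (sxf n i0 x) sxxL); rewrite -resw => h; exact: h.
have dA' : window_dots n A c a'.
  split; first exact: inw bA'.
  by move: (mpA x' x'L); rewrite -resa' => h; exact: h.
have dW' : window_dots n A c w'.
  split; first exact: inw bW'.
  by move: (mpA (sxf n i0 x') sxx'L); rewrite -resw' => h; exact: h.
exists c, a, w, a', w'.
split; first by split.
split.
  apply/eqP => e; move: (neq_sx x xL); by rewrite -resa -resw e eqxx.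
split.
  apply/eqP => e; move: (neq_sx x' x'L); by rewrite -resa' -resw' e eqxx.
split.
  apply/eqP => -[e _]; move: xx'.
  by rewrite -(lowmp x xL) -(lowmp x' x'L) -resa -resa' e eqxx.
move=> i; rewrite aE wE a'E w'E.
by move: (hV i); case: (V i) => [[[[a1 w1] a2] w2] c1] /= [_ _ _ _ []].
Qed.


Lemma part1 m (n : 'I_m -> nat) (A : {ffun 'I_m -> nat} -> bool) k :
  (2 <= m)%N -> (forall i, (2 <= n i)%N) ->
  perm_array_wrt n k A -> odd (perm_order n k) ->
  exists c : {ffun 'I_m -> int}, rep_dv (window_dots n A c).
Proof.
move=> hm hn [/andP[k0 km] [phi [H1 [H2 [H3 H4]]]]] hodd.
pose B := (\max_i n i).+1.
have nB i : n i < B by rewrite ltnS; exact: leq_bigmax.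
pose bl (i : 'I_m) := if i < k then n i else 1%N.
pose bh (i : 'I_m) := if i < k then 1%N else n i.
have lowE x : lowbox n k x <-> forall i, x i < bl i.
  split => h i; move: (h i); rewrite /bl; case: ifP => //; by rewrite ltnS leqn0.
have highE x : highbox n k x <-> forall i, x i < bh i.
  split => h i; move: (h i); rewrite /bh; case: ifP => //; by rewrite ltnS leqn0.
have blB i : bl i <= B by rewrite /bl; case: ifP => _; [exact: ltnW | by []].
have bhB i : bh i <= B by rewrite /bh; case: ifP => _; [by [] | exact: ltnW].
have lowB x : lowbox n k x -> forall i, x i < B.
  by move=> /lowE h i; apply: leq_trans (h i) (blB i).
have highB x : highbox n k x -> forall i, x i < B.
  by move=> /highE h i; apply: leq_trans (h i) (bhB i).
pose emb (p : {ffun 'I_m -> 'I_B}) : {ffun 'I_m -> nat} := [ffun i => val (p i)].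
pose proj (a : {ffun 'I_m -> nat}) : {ffun 'I_m -> 'I_B} := [ffun i => inord (a i)].
have embK p : proj (emb p) = p by apply/ffunP => i; rewrite !ffunE inord_val.
have projK (a : {ffun 'I_m -> nat}) : (forall i, a i < B) -> emb (proj a) = a.
  by move=> h; apply/ffunP => i; rewrite !ffunE /= inordK.
have emb_inj : injective emb by move=> p q /(congr1 proj); rewrite !embK.
pose Low := [set p : {ffun 'I_m -> 'I_B} | [forall i, p i < bl i]].
pose High := [set p : {ffun 'I_m -> 'I_B} | [forall i, p i < bh i]].
have inLow p : p \in Low <-> lowbox n k (emb p).
  rewrite inE lowE; split => [/forallP h i | h]; first by rewrite ffunE; exact: h.
  by apply/forallP => i; move: (h i); rewrite ffunE.
have inHigh p : p \in High <-> highbox n k (emb p).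
  rewrite inE highE; split => [/forallP h i | h]; first by rewrite ffunE; exact: h.
  by apply/forallP => i; move: (h i); rewrite ffunE.
pose Phi p := proj (phi (emb p)).
have cardLH : #|Low| = #|High|.
  have e : Phi @: Low = High.
    apply/setP => q; apply/imsetP/idP.
      move=> [p /inLow pL ->]; apply/inHigh; rewrite /Phi projK; first exact: H1.
      exact: highB (H1 _ pL).
    move=> /inHigh qH; have [x [xL xe]] := H3 _ qH.
    exists (proj x); first by apply/inLow; rewrite projK //; exact: lowB.
    by rewrite /Phi projK ?xe ?embK //; exact: lowB.
  rewrite -e card_in_imset // => p p' /inLow pL /inLow p'L /(congr1 emb).
  rewrite /Phi !projK; try exact: highB (H1 _ _).
  by move=> /(H2 _ _ pL p'L) /emb_inj.
have cL : #|Low| = perm_order n k.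
  by rewrite card_box // /perm_order [RHS]big_mkcond.
have oL : odd (\prod_i bl i) by rewrite -(card_box blB) cL.
have oH : odd (\prod_i bh i) by rewrite -(card_box bhB) -cardLH cL.
have oddn j : odd (n j).
  case: (ltnP j k) => h.
    by move: (odd_prod_factor j oL); rewrite /bl h.
  by move: (odd_prod_factor j oH); rewrite /bh ltnNge h.
have m0 : (0 < m)%N by apply: leq_trans hm.
pose i0 : 'I_m := Ordinal m0.
have hi0 : i0 < k by [].
have sxL (x : {ffun 'I_m -> nat}) : lowbox n k x -> lowbox n k (sxf n i0 x).
  move=> xL i; rewrite ffunE; case: eqP => [-> | _]; last exact: xL.
  by rewrite hi0 ltn_pmod //; apply: leq_trans (hn i0).
pose D := Df n k phi i0.
have DB x i : D x i < B.
  rewrite ffunE; case: ifP => _; first by [].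
  by apply: leq_trans (ltn_pmod _ _) (ltnW (nB i)); apply: leq_trans (hn i).
pose z0 : {ffun 'I_m -> 'I_B} := [ffun _ => ord0].
have z0H : z0 \in High.
  apply/inHigh => i; rewrite !ffunE /=; case: ifP => // _.
  by apply: leq_trans (hn i).
pose Delta p := proj (D (emb p)).
have DH p : p \in Low -> Delta p \in High :\ z0.
  move=> /inLow pL; rewrite in_setD1; apply/andP; split.
    apply/eqP => /(congr1 emb); rewrite /Delta projK // => e0.
    have e1 : phi (sxf n i0 (emb p)) = phi (emb p).
      apply/ffunP => i; case hik: (i < k).
        move: (H1 _ (sxL _ pL) i) (H1 _ pL i); rewrite hik => /eqP -> /eqP -> //.
      move: (congr1 (fun f : {ffun 'I_m -> nat} => f i) e0); rewrite !ffunE hik /=.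
      have b1 := H1 _ (sxL _ pL) i; have b2 := H1 _ pL i; rewrite hik in b1 b2.
      move=> e2; have := divn_eq (phi (sxf n i0 (emb p)) i + n i - phi (emb p) i) (n i).
      rewrite e2 addn0; move: b1 b2; generalize ((phi (sxf n i0 (emb p)) i + n i - phi (emb p) i) %/ n i) (phi (sxf n i0 (emb p)) i) (phi (emb p) i) (n i) => d u v N b1 b2 e3.
      clear -b1 b2 e3; move: e3; generalize ((u + N - v) %/ N) => q; case: q => [|[|q]] e3; nia.
    have := congr1 (fun f : {ffun 'I_m -> nat} => f i0) (H2 _ _ (sxL _ pL) pL e1).
    rewrite ffunE eqxx => /eqP; apply/negP; apply: succ_mod_neq; first exact: hn.
    by move: (pL i0); rewrite hi0.
  apply/inHigh; rewrite /Delta projK // => i; rewrite ffunE; case hik: (i < k) => //.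
  by rewrite ltn_pmod //; apply: leq_trans (hn i).
case: (boolP [exists p in Low, exists q in Low, (p != q) && (Delta p == Delta q)]).
  move=> /exists_inP[p /inLow pL /exists_inP[q /inLow qL /andP[pq /eqP e]]].
  apply: (@geom m n A k phi i0 (emb p) (emb q)) => //.
    by apply: contra pq => /eqP/emb_inj ->.
  have eq1 := projK (D (emb p)) (DB _); have eq2 := projK (D (emb q)) (DB _).
  apply: (etrans (esym eq1)); apply: (etrans _ eq2); by move: e; rewrite /Delta => ->.
move=> hno; exfalso.
have inj : {in Low &, injective Delta}.
  move=> p q pL qL e; apply/eqP; apply: contraNT hno => ne.
  by apply/exists_inP; exists p => //; apply/exists_inP; exists q => //; rewrite ne e eqxx.
have : #|Delta @: Low| <= #|High :\ z0|.
  by apply: subset_leq_card; apply/subsetP => _ /imsetP[p pL ->]; exact: DH.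
by rewrite card_in_imset // cardLH (cardsD1 z0 High) z0H ltnn.
Qed.
Theorem mainTheorem7 (m : nat) (n : 'I_m -> nat) (A : {ffun 'I_m -> nat} -> bool) :
  (2 <= m)%N -> (forall i, (2 <= n i)%N) ->
  (forall k, perm_array_wrt n k A -> odd (perm_order n k) ->
     exists c : {ffun 'I_m -> int}, rep_dv (window_dots n A c))
  /\
  (forall k, perm_array_wrt n k A -> odd (perm_order n k) ->
     costas n A -> ~ periodic_costas n A).
Proof.
move=> hm hn; split.
  by move=> k hk ho; exact: part1 hm hn hk ho.
move=> k hk ho _ [_ hper]; have [c hc] := part1 hm hn hk ho; exact: hper c hc.
Qed.
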